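(* Let $r\geq 2$ and $d\geq 2$ be integers and let $\mathbf a=(a_1,\ldots,a_r)$ be a sequence of positive integers. For an integer $n\geq 0$ let $\mathbf p_{\mathbf a,d}(n)$ denote the number of integer tuples $(x_1,\ldots,x_r)$ with $\sum_{i=1}^r a_ix_i=n$, $x_i\geq 0$ and $x_i\equiv 0$ or $x_i\equiv 1\pmod d$ for all $i$. Write $d\mathbf a=(da_1,\ldots,da_r)$, $[r]=\{1,\ldots,r\}$, and for $J\subseteq[r]$ let $a_J=\sum_{i\in J}a_i$ (so $a_\emptyset=0$). Then for all $n\geq 0$, $$\mathbf p_{\mathbf a,d}(n)=\sum_{J\subseteq[r]}p_{d\mathbf a}(n-a_J),$$ and the polynomial part of $\mathbf p_{\mathbf a,d}$ satisfies $$P_{\mathbf a,d}(n)=\sum_{J\subseteq[r]}P_{d\mathbf a}(n-a_J).$$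
   Context: For a sequence $\mathbf b=(b_1,\ldots,b_r)$ of positive integers and an integer $m$, $p_{\mathbf b}(m)$ is the number of integer tuples $(y_1,\ldots,y_r)$ with $y_i\geq 0$ and $\sum_i b_iy_i=m$ (so $p_{\mathbf b}(m)=0$ for $m<0$). The polynomial part $P_{\mathbf b}(m)$ of $p_{\mathbf b}$ is the polynomial in $m$ given by the coefficient of $t^{-1}$ in the Laurent expansion at $t=0$ of $\dfrac{e^{mt}}{\prod_{i=1}^r(1-e^{-b_it})}$ (Sylvester's first wave). The polynomial part $P_{\mathbf a,d}(n)$ of $\mathbf p_{\mathbf a,d}$ is the coefficient of $t^{-1}$ in the Laurent expansion at $t=0$ of $e^{nt}\prod_{i=1}^r\dfrac{1+e^{-a_it}}{1-e^{-da_it}}$. *)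

(* Defs.v *)
From HB Require Import structures.
From mathcomp Require Import all_boot all_order all_algebra.
Set Implicit Arguments. Unset Strict Implicit. Unset Printing Implicit Defensive.
Import Order.TTheory GRing.Theory Num.Theory.
Local Open Scope ring_scope.

(* p_b(m): number of (y_1,..,y_r) in N^r with sum_i b_i y_i = m, and 0
   for m < 0.  Since all b_i are positive (standing assumption), every
   solution satisfies y_i <= m, so enumerating y_i in 'I_(m.+1) counts
   all solutions. *)
Definition pcount (r : nat) (b : 'I_r -> nat) (m : int) : nat :=
  match m with
  | Posz k => #|[set y : {ffun 'I_r -> 'I_k.+1} |
                 (\sum_(i < r) b i * y i)%N == k]|
  | Negz _ => 0%N
  end.

(* bold p_{a,d}(n): number of (x_1,..,x_r) in N^r with sum a_i x_i = n
   and x_i = 0 or 1 (mod d) for all i (again x_i <= n as a_i >= 1). *)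
Definition pad (r d : nat) (a : 'I_r -> nat) (n : nat) : nat :=
  #|[set x : {ffun 'I_r -> 'I_n.+1} |
      ((\sum_(i < r) a i * x i)%N == n) &&
      [forall i, ((x i %% d)%N == 0%N) || ((x i %% d)%N == 1%N)]]|.

(* Formal power series in t with coefficients in Q[m] = {poly rat}      *)
(* (the variable m of the polynomial part is the polynomial variable 'X) *)

Definition series := nat -> {poly rat}.

Definition sone : series := fun k => (k == 0%N)%:R.
Definition sadd (f g : series) : series := fun k => f k + g k.
Definition sopp (f : series) : series := fun k => - f k.
Definition smul (f g : series) : series :=
  fun k => \sum_(i < k.+1) f i * g (k - i)%N.
Definition spow (f : series) (j : nat) : series := iter j (smul f) sone.

Definition sexp (c : {poly rat}) : series :=
  fun k => (k`!%:R : rat)^-1 *: c ^+ k.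

(* f / t^v  (meaningful when the first v coefficients of f vanish) *)
Definition sshift (v : nat) (f : series) : series := fun k => f (k + v)%N.

(* inverse of a series whose constant coefficient c = f 0 is a unit:
   f = c (1 - V) with V_0 = 0, and f^{-1} = c^{-1} sum_j V^j. *)
Definition sinv (f : series) : series :=
  let c := f 0%N in
  let V : series := fun k => if k == 0%N then 0 else - (c^-1 * f k) in
  fun k => c^-1 * \sum_(j < k.+1) spow V j k.

(* Coefficient of t^{-1} in the Laurent expansion at t = 0 of N(t)/D(t),
   where D is a power series of order (t-adic valuation) exactly v:
   N/D = t^{-v} * N * (D/t^v)^{-1}. *)
Definition laurent_coef_m1 (N D : series) (v : nat) : {poly rat} :=
  if v is v'.+1 then smul N (sinv (sshift v D)) v' else 0.

(* prod_i (1 - e^{-b_i t}); it has order exactly r when all b_i > 0 *)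
Definition denom (r : nat) (b : 'I_r -> nat) : series :=
  \big[smul/sone]_(i < r) sadd sone (sopp (sexp (- ((b i)%:R)%:P))).

(* Polynomial part P_b(m): coefficient of t^{-1} of
   e^{m t} / prod_i (1 - e^{-b_i t}), evaluated at m (an element of Q[X];
   P_b itself is polypart r b 'X). *)
Definition polypart (r : nat) (b : 'I_r -> nat) (m : {poly rat}) : {poly rat} :=
  laurent_coef_m1 (sexp m) (denom b) r.

Definition polypart_ad (r d : nat) (a : 'I_r -> nat) (n : {poly rat})
  : {poly rat} :=
  laurent_coef_m1
    (smul (sexp n)
          (\big[smul/sone]_(i < r) sadd sone (sexp (- ((a i)%:R)%:P))))
    (denom (fun i => (d * a i)%N)) r.

(* Main.v *)
Require Import Defs.
From HB Require Import structures.
From mathcomp Require Import all_boot all_order all_algebra.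
From mathcomp Require Import zify.
Import Order.TTheory GRing.Theory Num.Theory.
Set Implicit Arguments.

Lemma sumJ r (a : 'I_r -> nat) (J : {set 'I_r}) (z : 'I_r -> nat) :
  \sum_i a i * (z i + (i \in J)) = \sum_i a i * z i + \sum_(i in J) a i.
Proof.
rewrite [X in _ + X]big_mkcond -big_split /=; apply: eq_bigr => i _.
by rewrite mulnDr; case: (i \in J); rewrite ?muln1 ?muln0.
Qed.

Lemma le_term r (a : 'I_r -> nat) (z : 'I_r -> nat) i :
  a i * z i <= \sum_j a j * z j.
Proof. by rewrite (bigD1 i) //= leq_addr. Qed.

Lemma cardJ r d (a : 'I_r -> nat) n (J : {set 'I_r}) :
  1 < d -> (forall i, 0 < a i) ->
  #|[set x : {ffun 'I_r -> 'I_n.+1} | [&& (\sum_i a i * x i == n),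
       [forall i, (x i %% d == 0) || (x i %% d == 1)]
     & ([set i | x i %% d == 1] == J)]]|
  = pcount (fun i => d * a i) (n%:Z - (\sum_(i in J) a i)%:Z)%R.
Proof.
move=> hd ha.
set aJ := \sum_(i in J) a i.
have decomp : forall x : {ffun 'I_r -> 'I_n.+1},
    [forall i, (x i %% d == 0) || (x i %% d == 1)] ->
    [set i | x i %% d == 1] == J ->
    forall i, (x i : nat) = d * (x i %/ d) + (i \in J).
  move=> x /forallP hx /eqP <- i; rewrite inE.
  rewrite {1}(divn_eq (x i) d) mulnC; congr (_ + _).
  by case/orP: (hx i) => /eqP ->.
have sumx : forall x : {ffun 'I_r -> 'I_n.+1},
    [forall i, (x i %% d == 0) || (x i %% d == 1)] ->
    [set i | x i %% d == 1] == J ->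
    \sum_i a i * x i = \sum_i d * a i * (x i %/ d) + aJ.
  move=> x h1 h2; rewrite (eq_bigr (fun i => a i * (d * (x i %/ d) + (i \in J)))).
    rewrite sumJ; congr (_ + _); apply: eq_bigr => i _.
    by rewrite mulnA (mulnC (a i)).
  by move=> i _; rewrite -decomp.
case: (leqP aJ n) => hn; last first.
  have -> : (n%:Z - aJ%:Z)%R = Negz (aJ - n).-1.
    rewrite NegzE prednK ?subn_gt0 //.
    by rewrite -subzn ?opprB // ltnW.
  apply/eqP; rewrite cards_eq0; apply/eqP/setP => x; rewrite !inE.
  apply/negbTE/negP => /and3P [/eqP hs h1 h2].
  have := sumx x h1 h2; rewrite hs => e.
  move: hn; rewrite e; lia.
rewrite subzn //=.
set k := n - aJ.
pose f := fun y : {ffun 'I_r -> 'I_k.+1} =>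
  [ffun i => (inord (d * y i + (i \in J)) : 'I_n.+1)].
set B := [set y : {ffun 'I_r -> 'I_k.+1} | _].
have bnd : forall y, y \in B -> forall i, d * y i + (i \in J) < n.+1.
  move=> y; rewrite inE => /eqP hy i.
  have Sy : \sum_j a j * (d * y j + (j \in J)) = n.
    have e : \sum_j a j * (d * y j) = \sum_j d * a j * y j.
      by apply: eq_bigr => j _; rewrite mulnA (mulnC (a j)).
    by rewrite sumJ e hy subnK.
  rewrite ltnS; apply: leq_trans (leq_pmull _ (ha i)) _.
  rewrite -[X in _ <= X]Sy; exact: le_term.
have finj : {in B &, injective f}.
  move=> y1 y2 h1 h2 /ffunP e; apply/ffunP => i; apply: val_inj.
  have := congr1 val (e i); rewrite !ffunE /= !inordK ?bnd //.
  move/eqP; rewrite eqn_add2r eqn_mul2l => /orP [/eqP d0|/eqP //].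
  by move: hd; rewrite d0.
rewrite -(card_in_imset finj).
apply: eq_card => x; rewrite inE.
apply/idP/imsetP.
  case/and3P => [/eqP hs h1 h2].
  have hk : \sum_i d * a i * (x i %/ d) = k.
    by rewrite /k; apply/eqP; rewrite -(eqn_add2r aJ) subnK // -sumx // hs.
  have bq : forall i, x i %/ d < k.+1.
    move=> i; rewrite ltnS -hk.
    apply: leq_trans (le_term (fun i => d * a i) _ i).
    by apply: leq_pmull; rewrite muln_gt0 ha andbT; lia.
  exists [ffun i => (inord (x i %/ d) : 'I_k.+1)].
    rewrite inE; apply/eqP; rewrite -[RHS]hk; apply: eq_bigr => i _.
    by rewrite ffunE inordK.
  apply/ffunP => i; apply: val_inj.
  rewrite /f ffunE /= ffunE inordK ?bq // inordK; first exact: decomp.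
  - exact: bq.
  - by move: (ltn_ord (x i)); rewrite {1}(decomp x h1 h2 i).
  - exact: bq.
case=> y hy ->; rewrite /f.
have hv : forall i, ([ffun i => (inord (d * y i + (i \in J)) : 'I_n.+1)] i : nat)
          = d * y i + (i \in J).
  by move=> i; rewrite ffunE inordK ?bnd.
have hm : forall i, (d * y i + (i \in J)) %% d = (i \in J).
  move=> i; rewrite mulnC modnMDl modn_small //; case: (i \in J) => /=; lia.
apply/and3P; split.
- move: hy; rewrite inE => /eqP hy.
  rewrite (eq_bigr (fun i => a i * (d * y i + (i \in J)))); last by move=> i _; rewrite hv.
  have e : \sum_j a j * (d * y j) = \sum_j d * a j * y j.
    by apply: eq_bigr => j _; rewrite mulnA (mulnC (a j)).
  by rewrite sumJ e hy subnK.
- apply/forallP => i; rewrite hv hm; by case: (i \in J).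
- apply/eqP/setP => i; rewrite inE hv hm; by case: (i \in J).
Qed.

Lemma part1 r d (a : 'I_r -> nat) n : 1 < d -> (forall i, 0 < a i) ->
  pad d a n =
     (\sum_(J : {set 'I_r})
        pcount (fun i => (d * a i)%N)
               (n%:Z - (\sum_(i in J) a i)%N%:Z)%R)%N.
Proof.
move=> hd ha.
rewrite /pad -sum1_card (partition_big (fun x : {ffun 'I_r -> 'I_n.+1} => [set i | x i %% d == 1]) xpredT) //.
apply: eq_bigr => J _; rewrite -(@cardJ r d a n J hd ha) -sum1_card.
by apply: eq_bigl => x; rewrite !inE andbA.
Qed.

From mathcomp Require Import ring.
Local Open Scope ring_scope.
Definition pp := {poly {poly rat}}.
Definition rep (K : nat) (f : series) (p : pp) := forall i, (i < K)%N -> f i = p`_i.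
Definition agree (K : nat) (p q : pp) := forall i, (i < K)%N -> p`_i = q`_i.
Definition EK (K : nat) (c : {poly rat}) : pp := \poly_(k < K) sexp c k.

Lemma rep_mul K f g p q : rep K f p -> rep K g q -> rep K (smul f g) (p * q).
Proof.
move=> hf hg i hi; rewrite /smul coefM; apply: eq_bigr => j _.
have hj := ltn_ord j.
rewrite hf ?hg //; lia.
Qed.

Lemma rep_one K : rep K sone 1.
Proof. by move=> i _; rewrite coef1. Qed.

Lemma rep_add K f g p q : rep K f p -> rep K g q -> rep K (sadd f g) (p + q).
Proof. by move=> hf hg i hi; rewrite coefD /sadd hf ?hg. Qed.

Lemma rep_exp K c : rep K (sexp c) (EK K c).
Proof. by move=> i hi; rewrite coef_poly hi. Qed.

Lemma agree_mul K p p' q q' : agree K p p' -> agree K q q' -> agree K (p * q) (p' * q').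
Proof.
move=> hp hq i hi; rewrite !coefM; apply: eq_bigr => j _.
have hj := ltn_ord j.
rewrite hp ?hq //; lia.
Qed.

Lemma agree_trans K p q s : agree K p q -> agree K q s -> agree K p s.
Proof. by move=> h1 h2 i hi; rewrite h1 ?h2. Qed.

Lemma agree_EE K c c' : agree K (EK K c * EK K c') (EK K (c + c')).
Proof.
move=> k hk; rewrite coefM coef_poly hk /sexp.
rewrite addrC exprDn scaler_sumr; apply: eq_bigr => j _.
have hj := ltn_ord j.
rewrite !coef_poly ifT; last lia.
rewrite ifT; last lia.
rewrite -scalerAl -scalerAr scalerA -scaler_nat scalerA mulrC.
congr (_ *: _); last by rewrite mulrC.
have hjk : (j <= k)%N by lia.
have := bin_fact hjk => /(congr1 (fun m => (m%:R : rat))).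
rewrite natrM natrM => e.
have h1 : (j`!%:R : rat) != 0 by rewrite pnatr_eq0 -lt0n fact_gt0.
have h2 : ((k - j)`!%:R : rat) != 0 by rewrite pnatr_eq0 -lt0n fact_gt0.
have h3 : (k`!%:R : rat) != 0 by rewrite pnatr_eq0 -lt0n fact_gt0.
have h4 : ('C(k, j)%:R : rat) != 0 by rewrite pnatr_eq0 -lt0n bin_gt0.
by rewrite -e; field; rewrite h1 h2 h4.
Qed.


Lemma lc_sum (I : finType) (N : series) (NJ : I -> series) D v :
  (forall i, N i = \sum_J NJ J i) ->
  laurent_coef_m1 N D v = \sum_J laurent_coef_m1 (NJ J) D v.
Proof.
case: v => [|v] h /=; first by rewrite big1.
rewrite /smul exchange_big; apply: eq_bigr => i _; by rewrite h mulr_suml.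
Qed.

Lemma key r (a : 'I_r -> nat) i :
  (smul (sexp 'X) (\big[smul/sone]_(j < r) sadd sone (sexp (- ((a j)%:R)%:P)))) i
  = \sum_(J : {set 'I_r}) sexp ('X - ((\sum_(j in J) a j)%N%:R)%:P) i.
Proof.
set K := i.+1.
have hr : rep K (\big[smul/sone]_(j < r) sadd sone (sexp (- ((a j)%:R)%:P)))
              (\prod_(j < r) (EK K (- ((a j)%:R)%:P) + 1)).
  apply: (big_ind2 (rep K)); first exact: rep_one.
    by move=> *; exact: rep_mul.
  move=> j _; rewrite addrC; exact: (rep_add (rep_one K) (rep_exp K _)).
rewrite (rep_mul (rep_exp K 'X) hr) //.
rewrite bigA_distr mulr_sumr coef_sum; apply: eq_bigr => J _.
rewrite -big_mkcond /=.
have ha : agree K (\prod_(j in J) EK K (- ((a j)%:R)%:P))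
                  (EK K (\sum_(j in J) - ((a j)%:R)%:P)).
  apply: (big_ind2 (fun p c => agree K p (EK K c))).
  - move=> k hk; rewrite coef1 coef_poly hk /sexp expr0n.
    by case: k hk => [|k] hk /=; rewrite ?invr1 ?scale1r ?scaler0.
  - move=> p1 c1 p2 c2 h1 h2; apply: agree_trans (agree_EE K c1 c2).
    exact: agree_mul.
  - by move=> j _ k hk.
have -> : 'X - ((\sum_(j in J) a j)%N%:R)%:P = 'X + \sum_(j in J) - ((a j)%:R)%:P :> {poly rat}.
  by rewrite natr_sum rmorph_sum -sumrN.
rewrite (rep_exp K) //.
rewrite -(agree_EE K) //.
exact: (agree_mul (fun k _ => erefl) ha).
Qed.

Lemma part2 r (a : 'I_r -> nat) d : (1 <= r)%N ->
  polypart_ad d a 'X =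
  \sum_(J : {set 'I_r})
     polypart (fun i => (d * a i)%N) ('X - ((\sum_(i in J) a i)%N%:R)%:P).
Proof.
move=> _; rewrite /polypart_ad /polypart; apply: lc_sum => i; exact: key.
Qed.

Theorem proposition2p2 (r d : nat) (a : 'I_r -> nat)
  (hr : (2 <= r)%N) (hd : (2 <= d)%N) (ha : forall i, (0 < a i)%N) :
  (forall n : nat,
     pad d a n =
     (\sum_(J : {set 'I_r})
        pcount (fun i => (d * a i)%N)
               (n%:Z - (\sum_(i in J) a i)%N%:Z))%N)
  /\
  polypart_ad d a 'X =
  \sum_(J : {set 'I_r})
     polypart (fun i => (d * a i)%N) ('X - ((\sum_(i in J) a i)%N%:R)%:P).
Proof.
split; first by move=> n; exact: part1.
by apply: part2; apply: leq_trans hr.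
Qed.
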